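(* Let $p,r$ be distinct primes with $p\geq 3$, and let $G$ be a finite group with $G=O^{p'}(G)$ that acts faithfully and completely reducibly on an elementary abelian $r$-group $V$. Assume that $|G|_p=p^c\geq p^2$, that $O_p(G)$ is cyclic of order $p$ and acts fixed-point-freely on $V$, and that every nonidentity element of $V$ is fixed by a unique subgroup of $G$ of order $p^{c-1}$. Then $G$ acts primitively on $V$.
   Context: $O^{p'}(G)$ is the smallest normal subgroup of $G$ whose index is not divisible by $p$; $O_p(G)$ is the largest normal $p$-subgroup of $G$; $|G|_p$ is the $p$-part of $|G|$. A group $U$ acts fixed-point-freely on $V$ if $U\ltimes V$ is a Frobenius group with complement $U$ and kernel $V$ (i.e. each nonidentity element of $U$ fixes only the identity of $V$). An irreducible $G$-module $V$ is imprimitive if $V=V_1\oplus\cdots\oplus V_n$ for some $n\geq 2$ subspaces $V_i$ permuted transitively by $G$; $V$ is primitive if it is irreducible and not imprimitive. *)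

(* Defs.v *)
From HB Require Import structures.
From mathcomp Require Import all_boot all_order all_algebra all_fingroup all_solvable all_field all_character.
Set Implicit Arguments. Unset Strict Implicit. Unset Printing Implicit Defensive.
Import GRing.Theory.
Local Open Scope ring_scope.

(* O^{p'}(G): the smallest normal subgroup of G whose index is not divisible
   by p, realised as the intersection of all such normal subgroups. *)
Definition Opres_pprime (gT : finGroupType) (p : nat) (G : {set gT}) : {set gT} :=
  (\bigcap_(H : {group gT} | (H <| G)%g && ~~ (p %| #|G : H|)%N) H)%g.

Definition mx_fixed_by (F : fieldType) (gT : finGroupType) (G : {group gT}) (n : nat)
  (rG : mx_representation F G n) (H : {set gT}) (v : 'rV[F]_n) : Prop :=
  forall h, h \in H -> v *m rG h = v.

Definition mx_fpf (F : fieldType) (gT : finGroupType) (G : {group gT}) (n : nat)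
  (rG : mx_representation F G n) (U : {set gT}) : Prop :=
  forall x, x \in U -> x != 1%g -> forall v : 'rV[F]_n, v *m rG x = v -> v = 0.

Definition mx_imprimitive (F : fieldType) (gT : finGroupType) (G : {group gT}) (n : nat)
  (rG : mx_representation F G n) : Prop :=
  exists m : nat, exists W : 'I_m -> 'M[F]_n,
    [/\ (2 <= m)%N,
        (\sum_i W i :=: 1%:M)%MS,
        mxdirect (\sum_i W i),
        (forall g i, g \in G -> exists j, (W i *m rG g :=: W j)%MS) &
        (forall i j, exists2 g, g \in G & (W i *m rG g :=: W j)%MS)].

Definition mx_primitive (F : fieldType) (gT : finGroupType) (G : {group gT}) (n : nat)
  (rG : mx_representation F G n) : Prop :=
  mx_irreducible rG /\ ~ mx_imprimitive rG.

(* Main.v *)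
Require Import Defs.
From HB Require Import structures.
From mathcomp Require Import all_boot all_order all_algebra all_fingroup all_solvable all_field all_character.
From mathcomp Require Import zify.
Set Implicit Arguments. Unset Strict Implicit. Unset Printing Implicit Defensive.
Import GRing.Theory.
Local Open Scope ring_scope.

Lemma subN_mx (F : fieldType) m1 m2 n (A : 'M[F]_(m1,n)) (B : 'M_(m2,n)) :
  (A <= B)%MS -> (- A <= B)%MS.
Proof. by move=> h; rewrite -scaleN1r scalemx_sub. Qed.

Lemma subB_mx (F : fieldType) m1 m2 n (A B : 'M[F]_(m1,n)) (C : 'M_(m2,n)) :
  (A <= C)%MS -> (B <= C)%MS -> (A - B <= C)%MS.
Proof. by move=> h1 h2; rewrite addmx_sub // subN_mx. Qed.

Lemma fix_pow2 (F : fieldType) n (v : 'rV[F]_n) (M : 'M[F]_n) :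
  v *m M *m M = v -> forall j, v *m M ^+ (j.*2) = v.
Proof.
move=> h; elim=> [|j IH]; first by rewrite expr0 mulmx1.
by rewrite doubleS !exprSr -!mulmxE !mulmxA IH h.
Qed.

Lemma repr_pow (F : fieldType) (gT : finGroupType) (G : {group gT}) n
  (rG : mx_representation F G n) m x : x \in G -> rG (x ^+ m)%g = rG x ^+ m.
Proof.
move=> Gx; elim: m => [|m IHm]; first by rewrite expg0 repr_mx1 expr0.
by rewrite expgS exprS -IHm repr_mxM ?groupX // mulmxE.
Qed.

Lemma zswap (V : zmodType) (a b c d : V) : a + b = c + d -> a - c = d - b.
Proof. by move=> e; rewrite -[a](addrK b) e addrAC [c + d]addrC addrK. Qed.

Definition Qv (F : fieldType) (gT : finGroupType) (G : {group gT}) n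
  (rG : mx_representation F G n) (A B : 'M[F]_n) (v : 'rV[F]_n) : Prop :=
  forall h, h \in G -> (v *m rG h <= A)%MS \/ (v *m rG h <= B)%MS.

Lemma core (F : fieldType) (gT : finGroupType) (G : {group gT}) n
  (rG : mx_representation F G n) (p c : nat) (A B : 'M[F]_n) :
  odd p ->
  (forall v : 'rV[F]_n, v != 0 ->
     exists H : {group gT},
       [/\ H \subset G, #|H| = (p ^ c.-1)%N, mx_fixed_by rG H v &
           forall K : {group gT}, K \subset G -> #|K| = (p ^ c.-1)%N ->
             mx_fixed_by rG K v -> K = H]) ->
  (forall x : 'rV[F]_n, (x <= A)%MS -> (x <= B)%MS -> x = 0) ->
  forall v1 v2 : 'rV[F]_n, (v1 <= A)%MS -> (v2 <= B)%MS -> v1 != 0 -> v2 != 0 ->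
  Qv rG A B v1 -> Qv rG A B v2 ->
  exists H : {group gT}, [/\ H \subset G, #|H| = (p ^ c.-1)%N,
     mx_fixed_by rG H v1 & mx_fixed_by rG H v2].
Proof.
move=> oddp U disj v1 v2 s1 s2 nz1 nz2 Q1 Q2.
have nzv : v1 + v2 != 0.
  apply/eqP=> e; move/eqP: nz1; apply; apply: disj => //.
  by rewrite -[v1]opprK (addr0_eq e) subN_mx.
have [H [sHG oH fH _]] := U _ nzv.
suff f1 : mx_fixed_by rG H v1.
  exists H; split=> // h hH; have := fH h hH.
  by rewrite mulmxDl f1 //; move/addrI.
move=> h hH; have hG : h \in G by apply: (subsetP sHG).
have e := fH h hH; rewrite mulmxDl in e.
case: (Q1 h hG) => [a1|b1]; case: (Q2 h hG) => [a2|b2].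
- exfalso; move/eqP: nz2; apply; apply: disj => //.
  have -> : v2 = (v1 *m rG h + v2 *m rG h) - v1 by rewrite e addrC addKr.
  by rewrite subB_mx // addmx_sub.
- apply/eqP; rewrite -subr_eq0; apply/eqP; apply: disj; first by rewrite subB_mx.
  have -> : v1 *m rG h - v1 = v2 - v2 *m rG h.
    exact: zswap.
  by rewrite subB_mx.
- have d : v1 - v2 *m rG h = 0.
    apply: disj; first by rewrite subB_mx.
    have -> : v1 - v2 *m rG h = v1 *m rG h - v2.
      by apply: zswap; rewrite -e addrC.
    by rewrite subB_mx.
  have e2 : v2 *m rG h = v1 by apply/eqP; rewrite eq_sym -subr_eq0 d.
  have e1 : v1 *m rG h = v2 by apply: (addIr (v2 *m rG h)); rewrite e e2 addrC.
  have hh : v1 *m rG h *m rG h = v1 by rewrite e1 e2.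
  have ok : odd #[h]%g.
    apply: (dvdn_odd (order_dvdG hH)); rewrite oH oddX oddp; exact: orbT.
  have -> : rG h = rG h ^+ ((#[h]%g.+1)./2.*2).
    rewrite even_halfK /=; last by rewrite ok.
    rewrite -(repr_pow rG _ hG). by rewrite expgS expg_order mulg1.
  exact: fix_pow2.
- exfalso; move/eqP: nz1; apply; apply: disj => //.
  have -> : v1 = (v1 *m rG h + v2 *m rG h) - v2 by rewrite e addrK.
  by rewrite subB_mx // addmx_sub.
Qed.

Lemma fixed0 (F : fieldType) (gT : finGroupType) (G : {group gT}) n
  (rG : mx_representation F G n) (K : {set gT}) : mx_fixed_by rG K 0.
Proof. by move=> h _; rewrite mul0mx. Qed.

Lemma contra_main (F : fieldType) (gT : finGroupType) (G : {group gT}) n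
  (rG : mx_representation F G n) (p c : nat) (A B : 'M[F]_n) :
  odd p -> (1 < p)%N -> (2 <= c)%N -> mx_faithful rG ->
  (forall v : 'rV[F]_n, v != 0 ->
     exists H : {group gT},
       [/\ H \subset G, #|H| = (p ^ c.-1)%N, mx_fixed_by rG H v &
           forall K : {group gT}, K \subset G -> #|K| = (p ^ c.-1)%N ->
             mx_fixed_by rG K v -> K = H]) ->
  (forall x : 'rV[F]_n, (x <= A)%MS -> (x <= B)%MS -> x = 0) ->
  forall a b : 'rV[F]_n, (a <= A)%MS -> (b <= B)%MS -> a != 0 -> b != 0 ->
  Qv rG A B a -> Qv rG A B b ->
  (forall K : {group gT}, K \subset G ->
     (forall x, Qv rG A B x -> (x <= A)%MS \/ (x <= B)%MS -> mx_fixed_by rG K x) ->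
     forall v, mx_fixed_by rG K v) ->
  False.
Proof.
move=> oddp p1 c2 faith U disj a b sa sb nza nzb Qa Qb span.
have [Ka [sKa oKa fKa uKa]] := U a nza.
have [Kb [sKb oKb fKb uKb]] := U b nzb.
have c1 : forall x, Qv rG A B x -> (x <= B)%MS -> mx_fixed_by rG Ka x.
  move=> x Qx sx; have [->|nzx] := eqVneq x 0; first exact: fixed0.
  have [H [sH oH f1 f2]] := core oddp U disj sa sx nza nzx Qa Qx.
  by rewrite -(uKa H).
have eab : Ka = Kb by apply: uKb => //; apply: c1.
have c2' : forall x, Qv rG A B x -> (x <= A)%MS -> mx_fixed_by rG Ka x.
  move=> x Qx sx; have [->|nzx] := eqVneq x 0; first exact: fixed0.
  have [H [sH oH f1 f2]] := core oddp U disj sx sb nzx nzb Qx Qb.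
  by rewrite eab -(uKb H).
have fall := span Ka sKa (fun x Qx o => match o with or_introl s => c2' x Qx s | or_intror s => c1 x Qx s end).
have sK1 : Ka \subset rker rG.
  apply/subsetP=> h hK; apply/rkerP; split; first exact: (subsetP sKa).
  apply/row_matrixP=> i; rewrite !rowE mulmx1; exact: fall.
have : Ka \subset [1 gT]%g by apply: subset_trans faith.
rewrite subG1 trivg_card1 oKa -[1%N](expn0 p) eqn_exp2l //.
by move/eqP; lia.
Qed.

Lemma Qmod (F : fieldType) (gT : finGroupType) (G : {group gT}) n
  (rG : mx_representation F G n) (U W : 'M[F]_n) v :
  mxmodule rG U -> (v <= U)%MS -> Qv rG U W v /\ Qv rG W U v.
Proof.
move=> mU sv; have H : forall h, h \in G -> (v *m rG h <= U)%MS.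
  by move=> h hG; apply: submx_trans (submxMr _ sv) (mxmoduleP mU h hG).
by split=> h hG; [left|right]; apply: H.
Qed.

Theorem lemma2p3 (p r : nat) (gT : finGroupType) (G : {group gT}) (n c : nat)
  (rG : mx_representation 'F_r G n) :
  prime p -> prime r -> p != r -> (3 <= p)%N ->
  Opres_pprime p G = G ->
  mx_faithful rG ->
  mx_completely_reducible rG 1%:M ->
  (#|G|`_p)%N = (p ^ c)%N -> (2 <= c)%N ->
  cyclic 'O_p(G)%g -> #|'O_p(G)%g| = p ->
  mx_fpf rG 'O_p(G)%g ->
  (forall v : 'rV['F_r]_n, v != 0 ->
     exists H : {group gT},
       [/\ H \subset G, #|H| = (p ^ c.-1)%N, mx_fixed_by rG H v &
           forall K : {group gT}, K \subset G -> #|K| = (p ^ c.-1)%N ->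
             mx_fixed_by rG K v -> K = H]) ->
  mx_primitive rG.
Proof.
move=> pp _ _ p3 _ faith CR pc c2 _ _ _ U.
have oddp : odd p.
  by case: (even_prime pp) => // p2; move: p3; rewrite p2.
have p1 : (1 < p)%N by rewrite prime_gt1.
have n0 : (0 < n)%N.
  rewrite lt0n; apply/negP => /eqP n0; move: faith pc.
  have sG : G \subset rker rG.
    apply/subsetP => g gG; apply/rkerP; split => //.
    by apply/matrixP => i; have := ltn_ord i; rewrite {2}n0.
  move=> faith; have := subset_trans sG faith; rewrite subG1 trivg_card1 => /eqP ->.
  rewrite partn1 -[1%N](expn0 p) => /eqP; rewrite eqn_exp2l //; lia.
have one_nz : (1%:M : 'M['F_r]_n) != 0 by rewrite -mxrank_eq0 mxrank1 -lt0n.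
split.
  split; [exact: mxmodule1 | exact: one_nz |].
  move=> V mV _ nzV; case: (boolP (1%:M <= V)%MS) => // nV; exfalso.
  case: (CR V mV (submx1 V)) => W mW defVW dxVW.
  have capVW := mxdirect_addsP dxVW.
  have disj : forall x : 'rV_n, (x <= V)%MS -> (x <= W)%MS -> x = 0.
    by move=> x s1 s2; apply/eqP; rewrite -submx0 -capVW sub_capmx s1 s2.
  have nzW : W != 0.
    apply/eqP => W0; move: nV; rewrite -defVW W0 addsmx0 submx_refl //.
  apply: (contra_main oddp p1 c2 faith U disj (nz_row_sub V) (nz_row_sub W)).
  - by rewrite nz_row_eq0.
  - by rewrite nz_row_eq0.
  - by case: (Qmod W mV (nz_row_sub V)).
  - by case: (Qmod V mW (nz_row_sub W)).
  move=> K sK fK v; have : (v <= V + W)%MS by rewrite defVW submx1.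
  case/sub_addsmxP => u ->; move=> h hK.
  rewrite mulmxDl.
  rewrite (fK (u.1 *m V)) ?(fK (u.2 *m W)) //.
  - by case: (Qmod V mW (submxMl u.2 W)).
  - by right; apply: submxMl.
  - by case: (Qmod W mV (submxMl u.1 V)).
  - by left; apply: submxMl.
case=> m [W [m2 defW dxW perm trans]].
have m0 : (0 < m)%N by lia.
pose i0 := Ordinal m0; pose i1 := Ordinal m2.
have ne10 : i1 != i0 by [].
pose B := (\sum_(j | j != i0) W j)%MS.
have capAB : (W i0 :&: B)%MS = 0 by exact: (mxdirect_sumsP dxW i0 isT).
have disj : forall x : 'rV_n, (x <= W i0)%MS -> (x <= B)%MS -> x = 0.
  by move=> x s1 s2; apply/eqP; rewrite -submx0 -capAB sub_capmx s1 s2.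
have Qb : forall k (v : 'rV_n), (v <= W k)%MS -> Qv rG (W i0) B v.
  move=> k v sv h hG; have [j ej] := perm h k hG.
  have svj : (v *m rG h <= W j)%MS by rewrite -ej submxMr.
  have [Ej|nj] := eqVneq j i0; first by left; rewrite -Ej.
  by right; apply: sumsmx_sup svj.
have inB : forall k (v : 'rV_n), k != i0 -> (v <= W k)%MS -> (v <= B)%MS.
  by move=> k v nk sv; apply: sumsmx_sup sv.
have nzW : forall i, W i != 0.
  move=> i; apply/eqP => Wi0; move: one_nz.
  have all0 : forall j, W j = 0.
    move=> j; have [g gG eg] := trans i j; apply/eqP; rewrite -submx0 -eg Wi0 mul0mx sub0mx //.
  have : (1%:M <= \sum_i W i)%MS by rewrite defW.
  by rewrite big1 // submx0 => ->.
apply: (contra_main oddp p1 c2 faith U disj (nz_row_sub (W i0)) (inB _ _ ne10 (nz_row_sub (W i1)))).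
- by rewrite nz_row_eq0.
- by rewrite nz_row_eq0.
- exact: Qb (nz_row_sub _).
- exact: Qb (nz_row_sub _).
move=> K sK fK v; have : (v <= \sum_i W i)%MS by rewrite defW submx1.
case/sub_sumsmxP => u -> h hK.
rewrite mulmx_suml; apply: eq_bigr => i _; apply: fK hK.
- exact: Qb (submxMl _ _).
have [->|ni] := eqVneq i i0; first by left; apply: submxMl.
by right; apply: inB ni (submxMl _ _).
Qed.
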